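(* Let $G$ be a graph, $e=uv$ an edge, and $w$ a vertex such that $w$ is an isolated vertex of $G-N_G[\{u,v\}]$ (in particular $w\notin N_G[\{u,v\}]$). If $w$ has a neighbour $x$ with $\deg_G(x)=2$, then $\operatorname{reg}(G)=\operatorname{reg}(G-e)$, where $G-e$ is obtained by deleting the edge $e$.
   Context: $N_G[\{u,v\}]=N_G(u)\cup N_G(v)\cup\{u,v\}$. $\operatorname{reg}(G)=\max\{j\ge0:\widetilde H_{j-1}(\operatorname{Ind}(G[S]);\Bbbk)\neq0\text{ for some }S\subseteq V(G)\}$ over a field $\Bbbk$, $\operatorname{Ind}$ the independence complex. *)

(* Defs.v *)
From HB Require Import structures.
From mathcomp Require Import all_boot all_order all_algebra.
Set Implicit Arguments. Unset Strict Implicit. Unset Printing Implicit Defensive.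
Import GRing.Theory.
Local Open Scope ring_scope.

(* A simple graph on a finite vertex type T is a symmetric irreflexive relation. *)

Section Defs.
Variables (F : fieldType) (T : finType).

Definition closedNbhEdge (E : rel T) (u v : T) : {set T} :=
  [set y | [|| y == u, y == v, E u y | E v y]].

Definition delEdge (E : rel T) (u v : T) : rel T :=
  fun a b => E a b && ~~ (((a == u) && (b == v)) || ((a == v) && (b == u))).

Definition degree (E : rel T) (x : T) : nat := #|[set y | E x y]|.

Definition indFace (E : rel T) (S : {set T}) (s : {set T}) : bool :=
  (s \subset S) && [forall x in s, forall y in s, ~~ E x y].

(* faces with j vertices (i.e. of dimension j-1), including the empty face *)
Definition faces (P : pred {set T}) (j : nat) : {set {set T}} :=
  [set s | P s & #|s| == j]%N.

Definition bsign (s : {set T}) (x : T) : F :=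
  (-1) ^+ #|[set y in s | (enum_rank y < enum_rank x)%N]|.

(* boundary matrix from chains on faces of size j.+1 to faces of size j
   (row-vector convention); for j = 0 this is the augmentation map. *)
Definition bdmx (P : pred {set T}) (j : nat) :
  'M[F]_(#|faces P j.+1|, #|faces P j|) :=
  \matrix_(i, k)
    (let s : {set T} := enum_val i in let t : {set T} := enum_val k in
     \sum_(x in s | s :\ x == t) bsign s x).

(* dimension of the reduced homology group H~_{j-1} of the simplicial complex P *)
Definition redHomDim (P : pred {set T}) (j : nat) : nat :=
  (#|faces P j| - (if j is j'.+1 then \rank (bdmx P j') else 0) - \rank (bdmx P j))%N.

Definition reg (E : rel T) : nat :=
  \max_(S : {set T}) \max_(j < #|T|.+2 | redHomDim (indFace E S) j != 0%N) (j : nat).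

End Defs.

(* Main.v *)
Require Import Defs.
From HB Require Import structures.
From mathcomp Require Import all_boot all_order all_algebra.
From Stdlib Require Import Classical.
From mathcomp Require Import ring.
Unset Printing Implicit Defensive.
Import GRing.Theory.
Local Open Scope ring_scope.

Section Chains.
Variables (F : fieldType) (T : finType).
Implicit Types (s t S R : {set T}) (H : rel T) (k n : nat).

Notation ch := {ffun {set T} -> F}.
Definition coef (s t : {set T}) : F := \sum_(x in s | s :\ x == t) bsign F s x.
Definition bd (c : ch) : ch := [ffun t => \sum_s c s * coef s t].
Definition cone (a : T) (l : ch) : ch :=
  [ffun t : {set T} => if a \in t then l (t :\ a) * bsign F t a else 0].
Definition uncone (a : T) (c : ch) : ch :=
  [ffun t : {set T} => if a \in t then 0 else c (a |: t) * bsign F (a |: t) a].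
Definition pout (a : T) (c : ch) : ch := [ffun t : {set T} => if a \in t then 0 else c t].
Definition afree (a : T) (c : ch) := forall t : {set T}, a \in t -> c t = 0.

Lemma bdE c t : bd c t = \sum_(x | x \notin t) c (x |: t) * bsign F (x |: t) x.
Proof.
rewrite ffunE /coef.
under eq_bigr do rewrite big_distrr /=.
rewrite (exchange_big_dep predT) //=.
rewrite [RHS]big_mkcond /=; apply: eq_bigr => x _.
rewrite (big_mkcond (fun s : {set T} => (x \in s) && (s :\ x == t))) /=.
rewrite (bigD1 (x |: t)) //= big1 ?addr0.
  rewrite setU11 /=; case: (boolP (x \in t)) => xt.
    by apply/ifN/negP => /eqP E; move: xt; rewrite -E setD11.
  by rewrite setU1K ?eqxx.
move=> s /negbTE sx; case: ifP => // /andP [xs /eqP st].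
by move: sx; rewrite -st setD1K ?eqxx.
Qed.

Lemma bdD c1 c2 : bd (c1 + c2) = bd c1 + bd c2.
Proof. apply/ffunP => t; rewrite !ffunE -big_split /=; apply: eq_bigr => s _. by rewrite ffunE mulrDl. Qed.
Lemma bdN c : bd (- c) = - bd c.
Proof. apply/ffunP => t; rewrite !ffunE -sumrN; apply: eq_bigr => s _. by rewrite ffunE mulNr. Qed.
Lemma bdB c1 c2 : bd (c1 - c2) = bd c1 - bd c2.
Proof. by rewrite bdD bdN. Qed.
Lemma bd0 : bd 0 = 0.
Proof. apply/ffunP => t; rewrite !ffunE big1 // => s _; by rewrite ffunE mul0r. Qed.

Lemma coneD a c1 c2 : cone a (c1 + c2) = cone a c1 + cone a c2.
Proof. apply/ffunP => t; rewrite !ffunE; case: ifP => _; by rewrite ?addr0 ?mulrDl. Qed.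
Lemma coneN a c : cone a (- c) = - cone a c.
Proof. apply/ffunP => t; rewrite !ffunE; case: ifP => _; by rewrite ?oppr0 ?mulNr. Qed.
Lemma coneB a c1 c2 : cone a (c1 - c2) = cone a c1 - cone a c2.
Proof. by rewrite coneD coneN. Qed.
Lemma cone0 a : cone a 0 = 0.
Proof. apply/ffunP => t; rewrite !ffunE; case: ifP => //; by rewrite mul0r. Qed.

Definition cnt (s : {set T}) (x : T) := #|[set y in s | (enum_rank y < enum_rank x)%N]|.

Lemma bsignE (s : {set T}) (x : T) : bsign F s x = (-1) ^+ cnt s x.
Proof. by []. Qed.

Lemma cntU1 (z : T) (s : {set T}) (x : T) : z \notin s -> cnt (z |: s) x = (cnt s x + (enum_rank z < enum_rank x))%N.
Proof.
move=> zs; rewrite /cnt; case: (boolP (enum_rank z < enum_rank x)%N) => zx.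
  have -> : [set y in z |: s | (enum_rank y < enum_rank x)%N] =
            z |: [set y in s | (enum_rank y < enum_rank x)%N].
    by apply/setP => y; rewrite !inE; case: eqP => // ->; rewrite zx.
  by rewrite cardsU1 inE (negbTE zs) addnC.
have -> : [set y in z |: s | (enum_rank y < enum_rank x)%N] =
            [set y in s | (enum_rank y < enum_rank x)%N].
  by apply/setP => y; rewrite !inE; case: eqP => // ->; rewrite (negbTE zx) (negbTE zs).
by rewrite addn0.
Qed.

Lemma sign_sq (n : nat) : (-1) ^+ n * (-1) ^+ n = 1 :> F.
Proof. by rewrite -expr2 sqrr_sign. Qed.

Lemma bsign_sq (s : {set T}) (x : T) : bsign F s x * bsign F s x = 1.
Proof. exact: sign_sq. Qed.

Lemma rank_lt2 (x a : T) : x != a ->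
  ((enum_rank x < enum_rank a)%N + (enum_rank a < enum_rank x)%N = 1)%N.
Proof.
move=> xa; have : enum_rank x != enum_rank a.
  by apply: contra xa => /eqP /enum_rank_inj ->.
move: (enum_rank x) (enum_rank a) => i j; rewrite -val_eqE /=.
by case: ltngtP.
Qed.

Lemma setU1D1 (x a : T) t : x != a -> (x |: t) :\ a = x |: (t :\ a).
Proof. move=> xa; apply/setP => y; rewrite !inE; case: (y =P x) => [->|] /=; by rewrite ?xa ?andbT. Qed.

Lemma sign_key (t : {set T}) a x : a \in t -> x \notin t ->
  bsign F (x |: t) a * bsign F (x |: t) x = - (bsign F t a * bsign F (x |: (t :\ a)) x).
Proof.
move=> aIt xt; have xa : x != a by apply: contraNneq xt => ->.
have xta : x \notin t :\ a by rewrite inE negb_and xt orbT.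
have ata : a \notin t :\ a by rewrite setD11.
have e1 : cnt (x |: t) a = (cnt t a + (enum_rank x < enum_rank a))%N by rewrite cntU1.
have e2 : cnt (x |: t) x = ((cnt (t :\ a) x + (enum_rank a < enum_rank x)))%N.
  by rewrite cntU1 // ltnn addn0 -cntU1 // setD1K.
have e3 : cnt (x |: (t :\ a)) x = cnt (t :\ a) x by rewrite cntU1 // ltnn addn0.
rewrite !bsignE e1 e2 e3 -!exprD.
have -> : (cnt t a + (enum_rank x < enum_rank a) + (cnt (t :\ a) x + (enum_rank a < enum_rank x)))%N
   = ((cnt t a + cnt (t :\ a) x) + ((enum_rank x < enum_rank a) + (enum_rank a < enum_rank x)))%N.
  by rewrite -!addnA; congr (_ + _)%N; rewrite addnC -addnA; congr (_ + _)%N; rewrite addnC.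
by rewrite rank_lt2 // exprD expr1 mulrN1.
Qed.

Lemma coneE a l t : cone a l t = if a \in t then l (t :\ a) * bsign F t a else 0.
Proof. by rewrite ffunE. Qed.

Lemma chB (f g : ch) t : (f - g) t = f t - g t. Proof. by rewrite !ffunE. Qed.
Lemma chD (f g : ch) t : (f + g) t = f t + g t. Proof. by rewrite !ffunE. Qed.
Lemma chN (f : ch) t : (- f) t = - f t. Proof. by rewrite !ffunE. Qed.
Lemma ch0 t : (0 : ch) t = 0. Proof. unfold GRing.zero; simpl. unfold ffun_zero. by rewrite ffunE. Qed.

Lemma bd_cone a l : afree a l -> bd (cone a l) = l - cone a (bd l).
Proof.
move=> fl; apply/ffunP => t; rewrite bdE chB coneE.
case: (boolP (a \in t)) => aIt.
  rewrite fl // sub0r bdE big_distrl -sumrN /=.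
  rewrite [RHS](bigD1 a) ?setD11 //= setD1K // fl // !mul0r oppr0 add0r.
  apply: eq_big => [x|x xt].
    rewrite !inE negb_and negbK; case: eqP => [->|_] /=; [exact: negbF | by rewrite andbT].
  have xa : x != a by apply: contraNneq xt => ->.
  rewrite coneE setU1r // setU1D1 // -mulrA sign_key //.
  by rewrite mulrN [bsign F t a * _]mulrC mulrA.
rewrite subr0 (bigD1 a) //= big1 ?addr0.
  by rewrite coneE setU11 setU1K // -mulrA bsign_sq mulr1.
move=> x /andP [xt xa]; rewrite coneE !inE; case: (a =P x) => [ax|_]; first by move: xa; rewrite ax eqxx.
by rewrite (negbTE aIt) mul0r.
Qed.

Definition supp (c : ch) (P : {set T} -> Prop) := forall s, c s != 0 -> P s.

Lemma ch_eq0 (c : ch) : (forall s, c s = 0) -> c = 0.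
Proof. by move=> h; apply/ffunP => s; rewrite h ch0. Qed.

Lemma unconeE a c t : uncone a c t = if a \in t then 0 else c (a |: t) * bsign F (a |: t) a.
Proof. by rewrite ffunE. Qed.
Lemma poutE a c t : pout a c t = if a \in t then 0 else c t.
Proof. by rewrite ffunE. Qed.

Lemma afree_bd a c : afree a c -> afree a (bd c).
Proof.
move=> fc t aIt; rewrite bdE big1 // => x _; by rewrite fc ?mul0r // setU1r.
Qed.

Lemma bd_supp c t : bd c t != 0 -> exists x, x \notin t /\ c (x |: t) != 0.
Proof.
move=> h; apply: NNPP => hn; move/negP: h; apply.
rewrite bdE big1 // => x xt; case: (boolP (c (x |: t) == 0)) => [/eqP -> |cx].
  by rewrite mul0r.
by exfalso; apply: hn; exists x.
Qed.

Lemma decomp a c : c = pout a c + cone a (uncone a c).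
Proof.
apply/ffunP => t; rewrite chD poutE coneE unconeE.
case: ifP => aIt; last by rewrite addr0.
by rewrite add0r setD11 setD1K // -mulrA bsign_sq mulr1.
Qed.

Lemma pout_afree a c : afree a (pout a c).
Proof. by move=> t aIt; rewrite poutE aIt. Qed.
Lemma uncone_afree a c : afree a (uncone a c).
Proof. by move=> t aIt; rewrite unconeE aIt. Qed.

Lemma uncone_cone a l : afree a l -> uncone a (cone a l) = l.
Proof.
move=> fl; apply/ffunP => t; rewrite unconeE coneE setU11.
case: ifP => aIt; first by rewrite fl.
by rewrite setU1K ?aIt // -mulrA bsign_sq mulr1.
Qed.

Lemma uncone_free a c : afree a c -> uncone a c = 0.
Proof. move=> fc; apply: ch_eq0 => t; rewrite unconeE; case: ifP => // _; by rewrite fc ?mul0r // setU11. Qed.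

Lemma pout_free a c : afree a c -> pout a c = c.
Proof. by move=> fc; apply/ffunP => t; rewrite poutE; case: ifP => // /fc ->. Qed.

Lemma pout_cone a l : pout a (cone a l) = 0.
Proof. by apply: ch_eq0 => t; rewrite poutE coneE; case: (a \in t). Qed.

Lemma poutD a c1 c2 : pout a (c1 + c2) = pout a c1 + pout a c2.
Proof. by apply/ffunP => t; rewrite !(chD, poutE); case: ifP; rewrite ?addr0. Qed.
Lemma poutN a c : pout a (- c) = - pout a c.
Proof. by apply/ffunP => t; rewrite !(chN, poutE); case: ifP; rewrite ?oppr0. Qed.
Lemma poutB a c1 c2 : pout a (c1 - c2) = pout a c1 - pout a c2.
Proof. by rewrite poutD poutN. Qed.
Lemma unconeD a c1 c2 : uncone a (c1 + c2) = uncone a c1 + uncone a c2.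
Proof. by apply/ffunP => t; rewrite !(chD, unconeE); case: ifP; rewrite ?addr0 ?mulrDl. Qed.
Lemma unconeN a c : uncone a (- c) = - uncone a c.
Proof. by apply/ffunP => t; rewrite !(chN, unconeE); case: ifP; rewrite ?oppr0 ?mulNr. Qed.
Lemma unconeB a c1 c2 : uncone a (c1 - c2) = uncone a c1 - uncone a c2.
Proof. by rewrite unconeD unconeN. Qed.

Lemma afree_cone a b l : b != a -> afree b l -> afree b (cone a l).
Proof.
move=> ba fl t bt; rewrite coneE; case: ifP => // _.
by rewrite fl ?mul0r // !inE ba.
Qed.

Lemma afreeD a c1 c2 : afree a c1 -> afree a c2 -> afree a (c1 + c2).
Proof. by move=> h1 h2 t at'; rewrite chD h1 ?h2 ?addr0. Qed.
Lemma afreeN a c : afree a c -> afree a (- c).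
Proof. by move=> h t at'; rewrite chN h ?oppr0. Qed.
Lemma afreeB a c1 c2 : afree a c1 -> afree a c2 -> afree a (c1 - c2).
Proof. by move=> h1 h2; apply: afreeD => //; apply: afreeN. Qed.
Lemma afree0 a : afree a 0.
Proof. by move=> t _; rewrite ch0. Qed.

Lemma bdd_aux n : forall (A : {set T}) (c : ch), #|A| = n ->
  (forall s, c s != 0 -> s \subset A) -> bd (bd c) = 0.
Proof.
elim: n => [|n IH] A c cA sc.
  have -> : bd c = 0; last by rewrite bd0.
  apply: ch_eq0 => t; rewrite bdE big1 // => x _.
  case: (c (x |: t) =P 0) => [->|/eqP]; first by rewrite mul0r.
  move/sc; move/eqP: cA; rewrite cards_eq0 => /eqP ->.
  by rewrite subset0 => /eqP/setP/(_ x); rewrite !inE eqxx.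
have : (0 < #|A|)%N by rewrite cA.
rewrite card_gt0 => /set0Pn [a aA].
have cA' : #|A :\ a| = n by move: cA; rewrite (cardsD1 a A) aA add1n => -[].
have h1 : bd (bd (pout a c)) = 0.
  apply: (IH (A :\ a)) => // s; rewrite poutE; case: ifP => as'; first by rewrite eqxx.
  move/sc => sA; apply/subsetP => y ys; rewrite !inE (subsetP sA) // andbT.
  by apply: contraFneq as' => <-.
have h2 : bd (bd (uncone a c)) = 0.
  apply: (IH (A :\ a)) => // s; rewrite unconeE; case: ifP => as'; first by rewrite eqxx.
  move=> h; have {h}: c (a |: s) != 0 by apply: contraNneq h => ->; rewrite mul0r.
  move/sc => sA; apply/subsetP => y ys; rewrite !inE (subsetP sA) ?setU1r // andbT.
  by apply: contraFneq as' => <-.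
have fm := uncone_afree a c.
rewrite [c](decomp a) !bdD h1 add0r (bd_cone _ _ fm) bdB (bd_cone _ _ (afree_bd _ _ fm)).
by rewrite h2 cone0 subr0 subrr.
Qed.

Lemma bdd c : bd (bd c) = 0.
Proof. by apply: (@bdd_aux #|[set: T]| setT) => // s _; apply: subsetT. Qed.


Section HC.
Variable P : pred {set T}.
Hypothesis Pdown : forall s t : {set T}, t \subset s -> P s -> P t.

Definition ext k (y : 'rV[F]_#|faces P k|) : ch :=
  [ffun t : {set T} => \sum_i ((enum_val i == t)%:R * y 0 i)].
Definition restr k (c : ch) : 'rV[F]_#|faces P k| := \row_i c (enum_val i).

Lemma restr_ext k y : restr k (ext k y) = y.
Proof.
apply/rowP => i; rewrite mxE ffunE (bigD1 i) //= eqxx mul1r big1 ?addr0 //.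
move=> i' ii'; rewrite (_ : (enum_val i' == enum_val i) = false) ?mul0r //.
by apply/negbTE; apply: contra ii' => /eqP /enum_val_inj ->.
Qed.

Lemma ext_supp k y : supp (ext k y) (fun s => s \in faces P k).
Proof.
move=> t; rewrite ffunE => h; apply: NNPP => nt; move/negP: h; apply.
rewrite big1 // => i _; case: eqP => [e|_]; last by rewrite mul0r.
by exfalso; apply: nt; rewrite -e; apply: enum_valP.
Qed.

Lemma ext_restr k c : supp c (fun s => s \in faces P k) -> ext k (restr k c) = c.
Proof.
move=> sc; apply/ffunP => t; rewrite ffunE.
case: (boolP (t \in faces P k)) => tf.
  rewrite (bigD1 (enum_rank_in tf t)) //= mxE (enum_rankK_in tf tf) eqxx mul1r.
  rewrite big1 ?addr0 // => i ii; rewrite (_ : (enum_val i == t) = false) ?mul0r //.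
  apply/negbTE; apply: contra ii => ei; apply/eqP; apply: enum_val_inj; by rewrite (enum_rankK_in tf tf); apply/eqP.
have -> : c t = 0 by apply/eqP; apply: contraR tf => /sc.
rewrite big1 // => i _; case: eqP => [e|_]; last by rewrite mul0r.
by move: tf; rewrite -e enum_valP.
Qed.

Lemma ext_inj k y1 y2 : ext k y1 = ext k y2 -> y1 = y2.
Proof. by move=> e; rewrite -(restr_ext k y1) e restr_ext. Qed.

Lemma ext0 k : ext k 0 = 0.
Proof. by apply: ch_eq0 => t; rewrite ffunE big1 // => i _; rewrite mxE mulr0. Qed.

Lemma restr_bd k y : restr k (bd (ext k.+1 y)) = y *m bdmx F P k.
Proof.
apply/rowP => i'; rewrite !mxE ffunE.
under eq_bigr do rewrite ffunE big_distrl /=.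
rewrite exchange_big /=; apply: eq_bigr => i _; rewrite mxE /=.
rewrite (bigD1 (enum_val i)) //= eqxx mul1r big1 ?addr0 //.
move=> s si; by rewrite eq_sym (negbTE si) mul0r mul0r.
Qed.

Lemma bd_supp_faces k c : supp c (fun s => s \in faces P k.+1) ->
  supp (bd c) (fun s => s \in faces P k).
Proof.
move=> sc t /bd_supp [x [xt /sc]]; rewrite !inE => /andP [Pxt /eqP cx].
rewrite (Pdown (x |: t)) ?subsetUr //=; move: cx; rewrite cardsU1 xt add1n.
by case=> ->.
Qed.

Lemma bd_ext k y : bd (ext k.+1 y) = ext k (y *m bdmx F P k).
Proof.
by rewrite -restr_bd ext_restr //; apply: bd_supp_faces; apply: ext_supp.
Qed.

Lemma bmx_mul k : bdmx F P k.+1 *m bdmx F P k = 0.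
Proof.
apply/row_matrixP => i; rewrite row_mul row0.
apply: (@ext_inj k); by rewrite -bd_ext rowE -bd_ext bdd ext0.
Qed.

Lemma bdry_iff k z : supp z (fun s => s \in faces P k) ->
  (exists c, supp c (fun s => s \in faces P k.+1) /\ bd c = z) <->
  (restr k z <= bdmx F P k)%MS.
Proof.
move=> sz; split.
  move=> [c [sc <-]]; rewrite -(ext_restr k.+1 c) // bd_ext restr_ext.
  exact: submxMl.
move=> /submxP [D e]; exists (ext k.+1 D); split; first exact: ext_supp.
by rewrite bd_ext -e ext_restr.
Qed.

Definition nbc k (z : ch) : Prop :=
  [/\ supp z (fun s => s \in faces P k), bd z = 0 &
      ~ exists c, supp c (fun s => s \in faces P k.+1) /\ bd c = z].

Lemma HC k : redHomDim F P k != 0%N <-> exists z, nbc k z.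
Proof.
rewrite /redHomDim; case: k => [|k].
  rewrite subn0; split.
    move=> h; have : ~~ (1%:M <= bdmx F P 0)%MS.
      rewrite sub1mx /row_full; apply: contra h => /eqP ->; by rewrite subnn.
    case/row_subPn => i ni; exists (ext 0 (row i 1%:M)); split.
    - exact: ext_supp.
    - apply: ch_eq0 => t; apply/eqP; apply: contraT => /bd_supp [x [xt]].
      move/ext_supp; rewrite !inE cardsU1 xt add1n => /andP [_ /eqP] //.
    - by move/bdry_iff => /(_ (ext_supp _ _)); rewrite restr_ext; apply/negP.
  move=> [z [sz _ nb]]; apply/eqP => h; apply: nb.
  apply: (proj2 (bdry_iff 0 z sz)); apply: submx_full; rewrite /row_full eqn_leq rank_leq_col.
  by rewrite -subn_eq0 h.
set A := bdmx F P k; set B := bdmx F P k.+1.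
have BK : (B <= kermx A)%MS by apply/sub_kermxP; apply: bmx_mul.
rewrite -mxrank_ker; split.
  move=> h; have : ~~ (kermx A <= B)%MS.
    apply: contra h => /mxrankS; rewrite -subn_eq0 => /eqP ->; done.
  case/row_subPn => i ni; exists (ext k.+1 (row i (kermx A))); split.
  - exact: ext_supp.
  - rewrite bd_ext; have /sub_kermxP -> : (row i (kermx A) <= kermx A)%MS by apply: row_sub.
    by rewrite ext0.
  - by move/bdry_iff => /(_ (ext_supp _ _)); rewrite restr_ext; apply/negP.
move=> [z [sz bz nb]]; apply/eqP => h; apply: nb.
apply: (proj2 (bdry_iff k.+1 z sz)).
have zK : (restr k.+1 z <= kermx A)%MS.
  apply/sub_kermxP; apply: (@ext_inj k); rewrite -bd_ext ext_restr // bz ext0 //.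
have KB : (kermx A <= B)%MS.
  have := mxrank_leqif_sup BK; move=> [_ <-]; rewrite eqn_leq mxrankS //=.
  by rewrite -subn_eq0 h.
exact: submx_trans zK KB.
Qed.

End HC.

Lemma supp_mono c (P Q : {set T} -> Prop) : supp c P -> (forall s, P s -> Q s) -> supp c Q.
Proof. by move=> h1 h2 s /h1 /h2. Qed.
Lemma supp0 P : supp 0 P.
Proof. by move=> s; rewrite ch0 eqxx. Qed.
Lemma suppD c1 c2 P : supp c1 P -> supp c2 P -> supp (c1 + c2) P.
Proof.
move=> h1 h2 s; rewrite chD; case: (c1 s =P 0) => [->|/eqP /h1 //].
by rewrite add0r => /h2.
Qed.
Lemma suppN c P : supp c P -> supp (- c) P.
Proof. by move=> h s; rewrite chN oppr_eq0 => /h. Qed.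
Lemma suppB c1 c2 P : supp c1 P -> supp c2 P -> supp (c1 - c2) P.
Proof. by move=> h1 h2; apply: suppD => //; apply: suppN. Qed.
Lemma supp_cone a m P (Q : {set T} -> Prop) : supp m P ->
  (forall s, P s -> a \notin s -> Q (a |: s)) -> supp (cone a m) Q.
Proof.
move=> sm h t; rewrite coneE; case: ifP => [aIt|]; last by rewrite eqxx.
move=> nz; have : m (t :\ a) != 0 by apply: contraNneq nz => ->; rewrite mul0r.
by move/sm => /h; rewrite setD11 setD1K //; apply.
Qed.
Lemma supp_uncone a c P : supp c P -> supp (uncone a c) (fun s => a \notin s /\ P (a |: s)).
Proof.
move=> sc t; rewrite unconeE; case: ifP => [|aIt]; first by rewrite eqxx.
move=> nz; have : c (a |: t) != 0 by apply: contraNneq nz => ->; rewrite mul0r.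
by move/sc.
Qed.
Lemma supp_pout a c P : supp c P -> supp (pout a c) (fun s => a \notin s /\ P s).
Proof. move=> sc t; rewrite poutE; case: ifP => [|aIt]; first by rewrite eqxx. by move/sc. Qed.
Lemma supp_afree a c (P : {set T} -> Prop) : supp c P -> (forall s, P s -> a \notin s) -> afree a c.
Proof.
move=> sc h t aIt; apply/eqP; apply: contraT => /sc /h; by rewrite aIt.
Qed.

Definition indep (H : rel T) (s : {set T}) := [forall x in s, forall y in s, ~~ H x y].

Lemma indepP H s : reflect (forall x y, x \in s -> y \in s -> ~~ H x y) (indep H s).
Proof.
apply: (iffP idP) => [h x y xs ys | h].
  by move/forall_inP: h => /(_ x xs) /forall_inP /(_ y ys).
by apply/forall_inP => x xs; apply/forall_inP => y ys; apply: h.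
Qed.

Lemma inF H S k s : (s \in faces (indFace H S) k) = [&& s \subset S, indep H s & #|s| == k].
Proof. by rewrite inE /indFace -andbA. Qed.

Lemma indFace_down H S : forall s t : {set T}, t \subset s -> indFace H S s -> indFace H S t.
Proof.
move=> s t ts /andP [sS /indepP h]; apply/andP; split; first exact: subset_trans ts sS.
by apply/indepP => x y xt yt; apply: h; apply: (subsetP ts).
Qed.

Lemma face_add H (Hsym : symmetric H) (Hirr : irreflexive H) S k s a :
  s \in faces (indFace H S) k -> a \in S -> a \notin s -> (forall y, y \in s -> ~~ H a y) ->
  a |: s \in faces (indFace H S) k.+1.
Proof.
rewrite !inF => /and3P [sS /indepP ind /eqP ck] aS as' ha.
rewrite cardsU1 as' ck add1n eqxx andbT; apply/andP; split.
  by apply/subsetP => y; rewrite !inE => /orP [/eqP ->|/(subsetP sS)].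
apply/indepP => y z; rewrite !inE => /orP [/eqP ->|ys] /orP [/eqP ->|zs].
- by rewrite Hirr.
- exact: ha.
- by rewrite Hsym; apply: ha.
- exact: ind.
Qed.

Lemma face_mono H H' S (S' : {set T}) k s : s \in faces (indFace H S) k -> S \subset S' ->
  (forall x y, H' x y -> H x y) -> s \in faces (indFace H' S') k.
Proof.
rewrite !inF => /and3P [sS /indepP ind ck] SS' hH; rewrite ck (subset_trans sS SS') /= andbT.
apply/indepP => x y xs ys; apply: contra (ind x y xs ys); exact: hH.
Qed.

Lemma face_del H S k s a : a |: s \in faces (indFace H S) k.+1 -> a \notin s ->
  [/\ s \in faces (indFace H S) k, a \in S & forall y, y \in s -> ~~ H a y].
Proof.
rewrite !inF => /and3P [sS /indepP ind]; rewrite cardsU1 => + as'; rewrite as' add1n eqSS => ck.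
split.
- rewrite ck andbT; apply/andP; split.
    by apply: subset_trans sS; apply: subsetUr.
  by apply/indepP => x y xs ys; apply: ind; rewrite inE ?xs ?ys orbT.
- by apply: (subsetP sS); rewrite setU11.
- by move=> y ys; apply: ind; rewrite !inE ?eqxx ?ys ?orbT.
Qed.

Lemma faces_ext (P Q : pred {set T}) k : P =1 Q -> faces P k = faces Q k.
Proof. by move=> e; apply/setP => s; rewrite !inE e. Qed.

Arguments supp_mono {c P Q}.
Arguments suppD {c1 c2 P}.
Arguments suppN {c P}.
Arguments suppB {c1 c2 P}.
Arguments supp_cone {a m P Q}.
Arguments supp_uncone {a c P}.
Arguments supp_pout {a c P}.
Arguments supp_afree {a c P}.
Arguments face_mono {H H' S S' k s}.
Arguments face_del {H S k s a}.

Lemma face_restrict {H S R k s} : s \in faces (indFace H S) k -> s \subset R ->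
  s \in faces (indFace H R) k.
Proof. by rewrite !inF => /and3P [_ -> ->] ->. Qed.

Lemma pout0 a : pout a 0 = 0.
Proof. by apply: ch_eq0 => t; rewrite poutE ch0; case: ifP. Qed.
Lemma uncone0 a : uncone a 0 = 0.
Proof. by apply: uncone_free; apply: afree0. Qed.

Lemma TRIV H H' S k z : (forall x y, H' x y -> H x y) ->
  nbc (indFace H' S) k z -> supp z (fun s => s \in faces (indFace H S) k) ->
  nbc (indFace H S) k z.
Proof.
move=> hH [_ bz nb] sz; split => // -[c [sc dc]]; apply: nb; exists c; split => //.
by apply: (supp_mono sc) => s sF; apply: (face_mono sF (subxx S) hH).
Qed.

Lemma VA H (Hsym : symmetric H) (Hirr : irreflexive H) R k z a :
  nbc (indFace H R) k z -> a \notin R ->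
  nbc (indFace H (a |: R)) k z \/ exists b, nbc (indFace H (R :\: [set y | H a y])) k b.
Proof.
move=> [sz bz nb] aR.
case: (classic (exists c, supp c (fun s => s \in faces (indFace H (a |: R)) k.+1) /\ bd c = z))
  => [[c [sc dc]]|nc]; last first.
  left; split => //; apply: (supp_mono sz) => s sF; exact: (face_mono sF (subsetUr _ _) (fun x y h => h)).
right.
have fz : afree a z.
  apply: (supp_afree sz) => s; rewrite inF => /and3P [sR _ _].
  by apply: contra aR => /(subsetP sR).
have ez : z = bd (pout a c) + uncone a c - cone a (bd (uncone a c)).
  by rewrite -dc {1}(decomp a c) bdD bd_cone ?addrA //; apply: uncone_afree.
have fp := pout_afree a c; have fq := uncone_afree a c.
have fbp := afree_bd _ _ fp; have fbq := afree_bd _ _ fq.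
have bq : bd (uncone a c) = 0.
  have := congr1 (uncone a) ez.
  rewrite (uncone_free a z fz) unconeB unconeD (uncone_free _ _ fbp) (uncone_free _ _ fq).
  rewrite (uncone_cone _ _ fbq) add0r sub0r.
  by move/esym/eqP; rewrite oppr_eq0 => /eqP.
exists (uncone a c); split => //.
- move=> s /(supp_uncone sc) [as' sF]; case: (face_del sF as') => sF' _ ha.
  move: sF'; rewrite !inF => /and3P [sR ind ck]; rewrite ind ck !andbT.
  apply/subsetP => y ys; rewrite !inE (negbTE (ha y ys)) /=.
  move: (subsetP sR y ys); rewrite !inE => /orP [/eqP ya|//].
  by move: as'; rewrite -ya ys.
- move=> [m [sm dm]]; apply: nb; exists (pout a c + m); split.
    apply: suppD.
      move=> s /(supp_pout sc) [as' sF]; apply: (face_restrict sF).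
      move: sF; rewrite inF => /and3P [sR _ _]; apply/subsetP => y ys.
      move: (subsetP sR y ys); rewrite !inE => /orP [/eqP ya|//].
      by move: as'; rewrite -ya ys.
    apply: (supp_mono sm) => s sF; exact: (face_mono sF (subsetDl _ _) (fun x y h => h)).
  by rewrite bdD dm ez bq cone0 subr0.
Qed.

Lemma SUSP H (Hsym : symmetric H) (Hirr : irreflexive H) R k q a b :
  nbc (indFace H R) k q -> a \notin R -> b \notin R -> a != b -> H a b ->
  (forall y, y \in R -> ~~ H a y) -> (forall y, y \in R -> ~~ H b y) ->
  nbc (indFace H (a |: (b |: R))) k.+1 (cone a q - cone b q).
Proof.
move=> [sq bq nb] aR bR ab Hab ha hb.
have sR : forall s, s \in faces (indFace H R) k -> s \subset R.
  by move=> s; rewrite inF => /and3P [].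
have fa : afree a q.
  by apply: (supp_afree sq) => s /sR sRs; apply: contra aR => /(subsetP sRs).
have fb : afree b q.
  by apply: (supp_afree sq) => s /sR sRs; apply: contra bR => /(subsetP sRs).
have RR : R \subset a |: (b |: R) by apply/subsetP => y yR; rewrite !inE yR !orbT.
split.
- apply: suppB; apply: (supp_cone sq) => s sF as'; apply: face_add => //.
  + by apply: face_mono sF RR _.
  + by rewrite setU11.
  + by move=> y ys; apply: ha; apply: (subsetP (sR _ sF)).
  + by apply: face_mono sF RR _.
  + by rewrite !inE eqxx orbT.
  + by move=> y ys; apply: hb; apply: (subsetP (sR _ sF)).
- by rewrite bdB !bd_cone // bq !cone0 !subr0 subrr.
- move=> [c [sc dc]]; apply: nb; exists (- uncone a c); split.
    apply: suppN => s /(supp_uncone sc) [as' sF].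
    case: (face_del sF as') => sF' _ hs; apply: (face_restrict sF').
    move: sF'; rewrite inF => /and3P [sR' _ _]; apply/subsetP => y ys.
    move: (subsetP sR' y ys); rewrite !inE => /or3P [/eqP ya|/eqP yb|//].
      by move: as'; rewrite -ya ys.
    by move: (hs y ys); rewrite yb Hab.
  have fp := pout_afree a c; have fq := uncone_afree a c.
  have fbp := afree_bd _ _ fp; have fbq := afree_bd _ _ fq.
  have fcb : afree a (cone b q) by apply: afree_cone => //; rewrite eq_sym.
  have := congr1 (uncone a) dc; rewrite unconeB (uncone_cone _ _ fa) (uncone_free _ _ fcb).
  rewrite subr0 {1}(decomp a c) bdD unconeD (uncone_free _ _ fbp) (bd_cone _ _ fq).
  rewrite unconeB (uncone_cone _ _ fbq) (uncone_free _ _ fq) add0r sub0r bdN.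
  by [].
Qed.

Lemma CL H (Hsym : symmetric H) (Hirr : irreflexive H) R k l w :
  supp l (fun s => s \in faces (indFace H R) k) -> bd l = 0 -> w \in R ->
  (forall y, y \in R -> ~~ H w y) ->
  exists m, supp m (fun s => s \in faces (indFace H R) k.+1) /\ bd m = l.
Proof.
move=> sl bl wR hw.
have el : l = pout w l + cone w (uncone w l) := decomp w l.
have fp := pout_afree w l; have fq := uncone_afree w l.
have eq : bd (pout w l) + uncone w l = 0.
  have := congr1 (pout w) bl; rewrite {1}el bdD (bd_cone _ _ fq) poutD poutB pout_cone subr0.
  by rewrite (pout_free _ _ (afree_bd _ _ fp)) (pout_free _ _ fq) pout0.
exists (cone w (pout w l)); split.
  apply: (supp_cone (supp_pout sl)) => s [_ sF] ws.
  apply: face_add => // y ys; apply: hw.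
  by move: sF; rewrite inF => /and3P [/subsetP sR _ _]; apply: sR.
rewrite (bd_cone _ _ fp); apply/esym; rewrite {1}el; congr (_ + _).
have -> : bd (pout w l) = - uncone w l by apply/eqP; rewrite -addr_eq0 eq.
by rewrite coneN opprK.
Qed.

Lemma reg_le (E1 E2 : rel T) :
  (forall S j z, nbc (indFace E1 S) j z -> exists R z', nbc (indFace E2 R) j z') ->
  (reg F E1 <= reg F E2)%N.
Proof.
move=> h; rewrite /reg; apply/bigmax_leqP => S _; apply/bigmax_leqP => j hj.
have [z hz] := (HC (indFace E1 S) (indFace_down E1 S) j).1 hj.
have [R [z' hz']] := h S j z hz.
have hR : redHomDim F (indFace E2 R) j != 0%N.
  by apply: (HC _ (indFace_down E2 R) j).2; exists z'.
apply: leq_trans (leq_bigmax R); exact: (leq_bigmax_cond j hR).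
Qed.

Section Edge.
Variables (E : rel T) (u v : T).
Hypotheses (Esym : symmetric E) (Eirr : irreflexive E) (Euv : E u v).

Lemma uv_neq : u != v.
Proof. by apply: contraTneq Euv => ->; rewrite Eirr. Qed.

Lemma dE_sym : symmetric (delEdge E u v).
Proof.
move=> x y; rewrite /delEdge Esym; congr (_ && ~~ _).
by rewrite orbC; congr (_ || _); rewrite andbC.
Qed.
Lemma dE_irr : irreflexive (delEdge E u v).
Proof. by move=> x; rewrite /delEdge Eirr. Qed.
Lemma dE_sub x y : delEdge E u v x y -> E x y.
Proof. by case/andP. Qed.
Lemma dE_u x y : x != u -> y != u -> delEdge E u v x y = E x y.
Proof. by move=> /negbTE xu /negbTE yu; rewrite /delEdge xu yu !andbF /= andbT. Qed.
Lemma dE_v x y : x != v -> y != v -> delEdge E u v x y = E x y.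
Proof. by move=> /negbTE xv /negbTE yv; rewrite /delEdge xv yv !andbF /= andbT. Qed.
Lemma dE_uv : delEdge E u v u v = false.
Proof. by rewrite /delEdge !eqxx /= andbF. Qed.

Definition uvfree (f : ch) := forall t, u \in t -> v \in t -> f t = 0.

Lemma face_dE S k s : s \in faces (indFace (delEdge E u v) S) k -> ~~ ((u \in s) && (v \in s)) ->
  s \in faces (indFace E S) k.
Proof.
rewrite !inF => /and3P [-> /indepP ind ->] nuv; rewrite andbT /=.
apply/indepP => x y xs ys; move: (ind x y xs ys).
case: (eqVneq x u) => [xu|xu]; case: (eqVneq y u) => [yu|yu].
- by rewrite xu yu Eirr.
- case: (eqVneq y v) => [yv|yv].
    by move: nuv; rewrite -xu -yv xs ys.
  have xv : x != v by rewrite xu uv_neq.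
  by rewrite (dE_v _ _ xv yv).
- case: (eqVneq x v) => [xv|xv].
    by move: nuv; rewrite -yu -xv xs ys.
  have yv : y != v by rewrite yu uv_neq.
  by rewrite (dE_v _ _ xv yv).
- by rewrite (dE_u _ _ xu yu).
Qed.

Lemma cc_val c t : cone u (cone v (uncone v (uncone u c))) t =
  if (u \in t) && (v \in t) then c t else 0.
Proof.
have uv := uv_neq.
rewrite coneE; case: (boolP (u \in t)) => ut //=.
rewrite coneE !inE eq_sym uv /=; case: (boolP (v \in t)) => vt; last by rewrite mul0r.
have vt' : v \in t :\ u by rewrite !inE eq_sym uv.
rewrite unconeE setD11 setD1K // unconeE setD11 setD1K //.
have e : forall X a b : F, a * a = 1 -> b * b = 1 -> X * a * b * b * a = X.
  by move=> X a b ha hb; rewrite -(mulrA (X * a)) hb mulr1 -mulrA ha mulr1.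
by apply: e; apply: bsign_sq.
Qed.

Lemma DEC1 S n c : supp c (fun s => s \in faces (indFace (delEdge E u v) S) n) ->
  supp (c - cone u (cone v (uncone v (uncone u c)))) (fun s => s \in faces (indFace E S) n) /\
  uvfree (c - cone u (cone v (uncone v (uncone u c)))).
Proof.
move=> sc; split.
  move=> t; rewrite chB cc_val; case: ifP => [_|nuv]; first by rewrite subrr eqxx.
  rewrite subr0 => /sc tF; apply: face_dE => //; by rewrite nuv.
by move=> t ut vt; rewrite chB cc_val ut vt subrr.
Qed.

Lemma DEC2 S n c : supp c (fun s => s \in faces (indFace (delEdge E u v) S) n) ->
  forall s, uncone v (uncone u c) s != 0 ->
  [/\ s \in faces (indFace E (S :\: closedNbhEdge E u v)) #|s|, u \in S, v \in S
    & n = #|s|.+2].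
Proof.
have uv := uv_neq.
move=> sc s /(supp_uncone (supp_uncone sc)) [vs [uvs]].
have us : u \notin s by move: uvs; rewrite !inE negb_or => /andP [].
rewrite inF => /and3P [sS /indepP ind /eqP cn].
have uS : u \in S by apply: (subsetP sS); rewrite setU11.
have vS : v \in S by apply: (subsetP sS); rewrite !inE eqxx orbT.
split => //; last by rewrite -cn !cardsU1 uvs vs.
rewrite inF eqxx andbT; apply/andP; split.
  apply/subsetP => y ys.
  have yu : y != u by apply: contraNneq us => <-.
  have yv : y != v by apply: contraNneq vs => <-.
  have yS : y \in S by apply: (subsetP sS); rewrite !inE ys !orbT.
  have yI : y \in u |: (v |: s) by rewrite !inE ys !orbT.
  have uI : u \in u |: (v |: s) by rewrite !inE eqxx.
  have vI : v \in u |: (v |: s) by rewrite !inE eqxx orbT.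
  have h1 := ind u y uI yI; have h2 := ind v y vI yI.
  have uv' : u != v := uv.
  have vu' : v != u by rewrite eq_sym.
  rewrite (dE_v _ _ uv' yv) in h1; rewrite (dE_u _ _ vu' yu) in h2.
  by rewrite !inE yS (negbTE yu) (negbTE yv) (negbTE h1) (negbTE h2).
apply/indepP => x y xs ys.
have xu : x != u by apply: contraNneq us => <-.
have yu : y != u by apply: contraNneq us => <-.
rewrite -(dE_u _ _ xu yu); apply: ind; by rewrite !inE ?xs ?ys !orbT.
Qed.

Lemma uvfree_UU f : uvfree f -> uncone v (uncone u f) = 0.
Proof.
move=> hf; apply: ch_eq0 => s; rewrite unconeE; case: ifP => // vs.
rewrite unconeE; case: ifP => [_|us]; first by rewrite mul0r.
by rewrite hf ?mul0r // !inE eqxx ?orbT.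
Qed.

Lemma uvfree_bd f : uvfree f -> uvfree (bd f).
Proof.
move=> hf t ut vt; rewrite bdE big1 // => x _; by rewrite hf ?mul0r // inE ?ut ?vt orbT.
Qed.

Lemma DL c0 l : uvfree c0 -> afree u l -> afree v l ->
  uvfree (bd (c0 + cone u (cone v l))) -> bd l = 0.
Proof.
move=> h0 fu fv h; have uv := uv_neq.
have fuc : afree u (cone v l) by apply: afree_cone.
have fubl : afree u (cone v (bd l)) by apply: afree_cone => //; apply: afree_bd.
have fvbl := afree_bd _ _ fv.
have := uvfree_UU _ h.
rewrite bdD (bd_cone _ _ fuc) (bd_cone _ _ fv) !unconeD (uvfree_UU _ (uvfree_bd _ h0)) add0r.
rewrite (uncone_free _ _ fuc) uncone0 add0r unconeN.
rewrite (uncone_cone _ _ (afreeB _ _ _ fu fubl)) unconeN unconeB.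
by rewrite (uncone_free _ _ fv) (uncone_cone _ _ fvbl) sub0r opprK.
Qed.

Lemma ALG m : afree u m -> afree v m ->
  cone u (cone v (bd m)) = cone u m - cone v m + bd (cone u (cone v m)).
Proof.
move=> fu fv; have uv := uv_neq.
have fuc : afree u (cone v m) by apply: afree_cone.
rewrite (bd_cone _ _ fuc) (bd_cone _ _ fv) coneB.
apply/ffunP => t; rewrite !(chD, chB, chN); ring.
Qed.

Lemma supp_cone2 m (P Q : {set T} -> Prop) : supp m P ->
  (forall s, P s -> u \notin s -> v \notin s -> Q (u |: (v |: s))) ->
  supp (cone u (cone v m)) Q.
Proof.
move=> sm h.
have s1 : supp (cone v m) (fun t => exists s, [/\ P s, v \notin s & t = v |: s]).
  by apply: (supp_cone sm) => s Ps vs; exists s.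
apply: (supp_cone s1) => t [s [Ps vs ->]]; rewrite !inE negb_or => /andP [_ us].
exact: h.
Qed.

Lemma dE_face_mono S k s : s \in faces (indFace E S) k -> s \in faces (indFace (delEdge E u v) S) k.
Proof. by move=> sF; apply: (face_mono sF (subxx S)) => x y; apply: dE_sub. Qed.

Lemma indFace_dE_free R : u \notin R -> indFace (delEdge E u v) R =1 indFace E R.
Proof.
move=> uR s; rewrite /indFace; case: (boolP (s \subset R)) => //= sR.
apply/idP/idP => /indepP h; apply/indepP => y z ys zs.
  have yu : y != u by apply: contraNneq uR => <-; apply: (subsetP sR).
  have zu : z != u by apply: contraNneq uR => <-; apply: (subsetP sR).
  by rewrite -(dE_u _ _ yu zu); apply: h.
by apply: contra (h y z ys zs); apply: dE_sub.
Qed.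

Lemma nbc_ext (P Q : pred {set T}) k z : P =1 Q -> nbc P k z -> nbc Q k z.
Proof. by move=> e; rewrite /nbc !(faces_ext _ _ _ e). Qed.

Section Main.
Variables (w x : T).
Hypotheses (hw : w \notin closedNbhEdge E u v)
  (hN : forall y, E w y -> y \in closedNbhEdge E u v) (Ewx : E w x) (deg : degree E x = 2%N).

Lemma inN y : (y \in closedNbhEdge E u v) = [|| y == u, y == v, E u y | E v y].
Proof. by rewrite inE. Qed.

Lemma wu : w != u. Proof. by apply: contraNneq hw => ->; rewrite inN eqxx. Qed.
Lemma wv : w != v. Proof. by apply: contraNneq hw => ->; rewrite inN eqxx orbT. Qed.
Lemma xN : x \in closedNbhEdge E u v. Proof. exact: hN. Qed.
Lemma wx : w != x. Proof. by apply: contraTneq Ewx => ->; rewrite Eirr. Qed.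
Lemma xu : x != u.
Proof. apply: contraNneq hw => e; rewrite inN; move: Ewx; rewrite e Esym => ->; by rewrite !orbT. Qed.
Lemma xv : x != v.
Proof. apply: contraNneq hw => e; rewrite inN; move: Ewx; rewrite e Esym => ->; by rewrite !orbT. Qed.
Lemma dE_w y : delEdge E u v w y = E w y.
Proof. by rewrite /delEdge (negbTE wu) (negbTE wv) /= andbT. Qed.

Lemma xnbr : exists a, [/\ (a == u) || (a == v), E x a & forall y, E x y -> (y == w) || (y == a)].
Proof.
have : [|| E u x | E v x].
  move: xN; rewrite inN (negbTE xu) (negbTE xv) /=; by [].
have key : forall a, E x a -> a != w -> forall y, E x y -> (y == w) || (y == a).
  move=> a xa aw y xy; apply: contraT; rewrite negb_or => /andP [yw ya].
  have : (#|w |: (a |: [set y])| <= degree E x)%N.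
    apply: subset_leq_card; apply/subsetP => z; rewrite !inE => /orP [/eqP ->|/orP [/eqP ->|/eqP ->]] //.
    by rewrite Esym.
  have e1 : (w == a) = false by rewrite eq_sym (negbTE aw).
  have e2 : (w == y) = false by rewrite eq_sym (negbTE yw).
  have e3 : (a == y) = false by rewrite eq_sym (negbTE ya).
  by rewrite deg !cardsU1 cards1 !inE e1 e2 e3.
case/orP => [ux|vx].
  have xu' : E x u by rewrite Esym.
  exists u; split => //; first by rewrite eqxx.
  by apply: key => //; rewrite eq_sym; exact: wu.
have xv' : E x v by rewrite Esym.
exists v; split => //; first by rewrite eqxx orbT.
by apply: key => //; rewrite eq_sym; exact: wv.
Qed.

Lemma D1 S j z : nbc (indFace E S) j z -> exists R z', nbc (indFace (delEdge E u v) R) j z'.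
Proof.
move=> [sz bz nb].
case: (classic (exists c, supp c (fun s => s \in faces (indFace (delEdge E u v) S) j.+1) /\ bd c = z))
  => [[c [sc dc]]|nc]; last first.
  exists S, z; split => //; apply: (supp_mono sz) => s; exact: dE_face_mono.
set l := uncone v (uncone u c).
have [sc0 uf0] := DEC1 S j.+1 c sc.
set c0 := c - cone u (cone v l) in sc0 uf0.
have ec : c = c0 + cone u (cone v l) by rewrite /c0 subrK.
have sl := DEC2 S j.+1 c sc.
set T0 := S :\: closedNbhEdge E u v in sl.
have T0S : T0 \subset S by apply: subsetDl.
have sT0 : forall s k, s \in faces (indFace E T0) k -> s \subset T0 by move=> s k; rewrite inF => /and3P [].
have uT0 : u \notin T0 by rewrite !inE eqxx.
have vT0 : v \notin T0 by rewrite !inE eqxx orbT.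
have T0nb : forall y, y \in T0 -> (y \notin closedNbhEdge E u v) by move=> y; rewrite inE => /andP [].
have fu : afree u l.
  apply: (supp_afree (fun s h => h)) => s /sl [sF _ _ _]; apply: contra uT0; exact: (subsetP (sT0 _ _ sF)).
have fv : afree v l.
  apply: (supp_afree (fun s h => h)) => s /sl [sF _ _ _]; apply: contra vT0; exact: (subsetP (sT0 _ _ sF)).
have bl : bd l = 0.
  apply: (DL c0 l uf0 fu fv); rewrite -ec dc => t ut vt; apply/eqP; apply: contraT => /sz.
  by rewrite inF => /and3P [_ /indepP h _]; move: (h u v ut vt); rewrite Euv.
case: (boolP ((u \in S) && (v \in S))) => [/andP [uS vS]|nuv]; last first.
  have l0 : l = 0.
    apply: ch_eq0 => s; apply/eqP; apply: contraT => /sl [_ uS vS _]; by move: nuv; rewrite uS vS.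
  exfalso; apply: nb; exists c0; split => //; by rewrite -dc ec l0 !cone0 addr0.
have noE : forall y, y \in T0 -> ~~ E u y /\ ~~ E v y.
  by move=> y /T0nb; rewrite inN !negb_or => /and4P [_ _ -> ->].
case: (classic (exists m, supp m (fun s => s \in faces (indFace E T0) j) /\ bd m = l))
  => [[m [sm dm]]|nm].
  exfalso; apply: nb; exists (c0 + cone u m - cone v m); split.
    apply: suppB; first apply: suppD => //.
      apply: (supp_cone sm) => s sF us; apply: face_add => //.
      + exact: (face_mono sF T0S (fun x y h => h)).
      + by move=> y /(subsetP (sT0 _ _ sF)) /noE [].
    apply: (supp_cone sm) => s sF vs; apply: face_add => //.
    + exact: (face_mono sF T0S (fun x y h => h)).
    + by move=> y /(subsetP (sT0 _ _ sF)) /noE [].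
  have fum : afree u m.
    apply: (supp_afree sm) => s sF; apply: contra uT0; exact: (subsetP (sT0 _ _ sF)).
  have fvm : afree v m.
    apply: (supp_afree sm) => s sF; apply: contra vT0; exact: (subsetP (sT0 _ _ sF)).
  rewrite -dc ec -dm (ALG m fum fvm) !bdD bdd addr0 -addrA; congr (_ + _).
case: j sz bz nb sc sc0 uf0 sl nm ec dc => [|k] sz bz nb sc sc0 uf0 sl nm ec dc.
  exfalso; apply: nm; exists 0; split; first exact: supp0.
  rewrite bd0; apply/esym/ch_eq0 => s; apply/eqP; apply: contraT => /sl [_ _ _] //.
have nbl : nbc (indFace E T0) k l.
  split => //.
  by move=> s /sl [sF _ _ [e]]; rewrite e.
case: (boolP (w \in S)) => wS.
  have wT0 : w \in T0 by rewrite inE hw.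
  have [m [sm dm]] := CL E Esym Eirr T0 k l w (let: And3 a _ _ := nbl in a) bl wT0
    (fun y yT => contra (hN y) (T0nb y yT)).
  by exfalso; apply: nm; exists m.
have wT0 : w \notin T0 by rewrite inE negb_and wS orbT.
have xT0 : x \notin T0 by rewrite inE xN.
have [a [au xa hxa]] := xnbr.
have hS := SUSP E Esym Eirr T0 k l w x nbl wT0 xT0 wx Ewx
  (fun y yT => contra (hN y) (T0nb y yT)).
have hx : forall y, y \in T0 -> ~~ E x y.
  move=> y yT; apply/negP => /hxa /orP [/eqP yw|/eqP ya].
    by move: wT0; rewrite -yw yT.
  move: (T0nb y yT); rewrite ya inN; by case/orP: au => /eqP ->; rewrite eqxx ?orbT.
exists (w |: (x |: T0)), (cone w l - cone x l).
apply: (nbc_ext (indFace E (w |: (x |: T0)))); last exact: hS hx.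
move=> s; apply/esym; apply: indFace_dE_free.
by rewrite !in_setU1 !negb_or (eq_sym u w) (eq_sym u x) wu xu uT0.
Qed.

Lemma WL S j z : w \in S -> nbc (indFace (delEdge E u v) S) j z ->
  exists z', nbc (indFace E S) j z'.
Proof.
move=> wS [sz bz nb].
have uv := uv_neq.
case: (boolP ((u \in S) && (v \in S))) => [/andP [uS vS]|nuv]; last first.
  exists z; apply: (TRIV E (delEdge E u v) S j z (dE_sub) (And3 sz bz nb)).
  apply: (supp_mono sz) => s sF; apply: (face_dE S j s sF).
  move: sF; rewrite inF => /and3P [sS _ _]; apply: contra nuv => /andP [us vs].
  by rewrite (subsetP sS _ us) (subsetP sS _ vs).
have [sc0 uf0] := DEC1 S j z sz.
set l := uncone v (uncone u z).
set z0 := z - cone u (cone v l) in sc0 uf0.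
have ez : z = z0 + cone u (cone v l) by rewrite /z0 subrK.
have sl := DEC2 S j z sz.
set T0 := S :\: closedNbhEdge E u v in sl.
have T0S : T0 \subset S by apply: subsetDl.
have sT0 : forall s k, s \in faces (indFace E T0) k -> s \subset T0 by move=> s k; rewrite inF => /and3P [].
have uT0 : u \notin T0 by rewrite !inE eqxx.
have vT0 : v \notin T0 by rewrite !inE eqxx orbT.
have T0nb : forall y, y \in T0 -> (y \notin closedNbhEdge E u v) by move=> y; rewrite inE => /andP [].
have noE : forall y, y \in T0 -> ~~ E u y /\ ~~ E v y.
  by move=> y /T0nb; rewrite inN !negb_or => /and4P [_ _ -> ->].
have fu : afree u l.
  apply: (supp_afree (fun s h => h)) => s /sl [sF _ _ _]; apply: contra uT0; exact: (subsetP (sT0 _ _ sF)).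
have fv : afree v l.
  apply: (supp_afree (fun s h => h)) => s /sl [sF _ _ _]; apply: contra vT0; exact: (subsetP (sT0 _ _ sF)).
have bl : bd l = 0.
  by apply: (DL z0 l uf0 fu fv); rewrite -ez bz => t _ _; rewrite ch0.
have wT0 : w \in T0 by rewrite inE hw.
have [m [sm dm]] : exists m, supp m (fun s => s \in faces (indFace E T0) #|s| /\ (#|s|.+1 = j)%N)
    /\ bd m = l.
  destruct j as [|[|k]].
  - exists 0; split; first exact: supp0.
    rewrite bd0; apply/esym/ch_eq0 => s; apply/eqP; apply: contraT => /sl [_ _ _] //.
  - exists 0; split; first exact: supp0.
    rewrite bd0; apply/esym/ch_eq0 => s; apply/eqP; apply: contraT => /sl [_ _ _] //.
  - have sl' : supp l (fun s => s \in faces (indFace E T0) k).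
      by move=> s /sl [sF _ _ [e]]; rewrite e.
    have [m [sm dm]] := CL E Esym Eirr T0 k l w sl' bl wT0
      (fun y yT => contra (hN y) (T0nb y yT)).
    exists m; split => // s /sm sF; split.
      by move: (sF); rewrite inF => /and3P [_ _ /eqP ->].
    by move: sF; rewrite inF => /and3P [_ _ /eqP ->].
have fum : afree u m.
  apply: (supp_afree sm) => s [sF _]; apply: contra uT0; exact: (subsetP (sT0 _ _ sF)).
have fvm : afree v m.
  apply: (supp_afree sm) => s [sF _]; apply: contra vT0; exact: (subsetP (sT0 _ _ sF)).
have ez' : z0 + cone u m - cone v m = z - bd (cone u (cone v m)).
  rewrite /z0 -dm (ALG m fum fvm); apply/ffunP => t; rewrite !(chD, chB, chN); ring.
exists (z0 + cone u m - cone v m); split.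
- apply: suppB; first apply: suppD => //.
    apply: (supp_cone sm) => s [sF e] us; rewrite -e; apply: face_add => //.
    + exact: (face_mono sF T0S (fun x y h => h)).
    + by move=> y /(subsetP (sT0 _ _ sF)) /noE [].
  apply: (supp_cone sm) => s [sF e] vs; rewrite -e; apply: face_add => //.
  + exact: (face_mono sF T0S (fun x y h => h)).
  + by move=> y /(subsetP (sT0 _ _ sF)) /noE [].
- by rewrite ez' bdB bz bdd subrr.
- move=> [c [sc dc]]; apply: nb; exists (c + cone u (cone v m)); split.
    apply: suppD; first by apply: (supp_mono sc) => s; apply: dE_face_mono.
    apply: (supp_cone2 _ _ _ sm) => s [sF e] us vs.
    have sF' := face_mono sF T0S (dE_sub).
    have h1 : v |: s \in faces (indFace (delEdge E u v) S) #|s|.+1.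
      apply: face_add => //; [exact: dE_sym | exact: dE_irr |].
      move=> y /(subsetP (sT0 _ _ sF)) /noE [_]; apply: contra; exact: dE_sub.
    rewrite -e; apply: face_add => //; [exact: dE_sym | exact: dE_irr | |].
      by rewrite !inE negb_or uv us.
    move=> y; rewrite !inE => /orP [/eqP ->|ys]; first by rewrite dE_uv.
    move: ys => /(subsetP (sT0 _ _ sF)) /noE [+ _]; apply: contra; exact: dE_sub.
  by rewrite bdD dc ez' subrK.
Qed.

Lemma UL S1 j z a : (a == u) || (a == v) -> E x a -> (forall y, E x y -> (y == w) || (y == a)) ->
  nbc (indFace (delEdge E u v) S1) j z -> w \notin S1 -> x \notin S1 ->
  (forall y, y \in S1 -> ~~ E w y) ->
  exists R z', nbc (indFace E R) j z'.
Proof.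
move=> au xa hxa [sz bz nb] wS1 xS1 hw1.
have Pa : forall y y', y != a -> y' != a -> delEdge E u v y y' = E y y'.
  by case/orP: au => /eqP ->; [apply: dE_u | apply: dE_v].
have fE : forall k s, s \in faces (indFace (delEdge E u v) S1) k -> a \notin s ->
    s \in faces (indFace E S1) k.
  move=> k s; rewrite !inF => /and3P [-> /indepP ind ->] as'; rewrite /= andbT.
  apply/indepP => y y' ys ys'; rewrite -Pa; first exact: ind.
    by apply: contraNneq as' => <-.
  by apply: contraNneq as' => <-.
have sS1 : forall k s, s \in faces (indFace (delEdge E u v) S1) k -> s \subset S1.
  by move=> k s; rewrite inF => /and3P [].
case: (boolP (a \in S1)) => aS; last first.
  exists S1, z; apply: (TRIV E (delEdge E u v) S1 j z dE_sub (And3 sz bz nb)).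
  apply: (supp_mono sz) => s sF; apply: fE => //; apply: contra aS; exact: (subsetP (sS1 _ _ sF)).
set p := pout a z; set q := uncone a z.
have fp := pout_afree a z; have fq := uncone_afree a z.
have fbp := afree_bd _ _ fp; have fbq := afree_bd _ _ fq.
have ez : z = p + cone a q := decomp a z.
have e0 : bd p + (q - cone a (bd q)) = 0 by rewrite -(bd_cone _ _ fq) -bdD -ez.
have bq : bd q = 0.
  have := congr1 (uncone a) e0; rewrite uncone0 unconeD unconeB (uncone_free _ _ fbp).
  rewrite (uncone_free _ _ fq) (uncone_cone _ _ fbq) add0r sub0r.
  by move/eqP; rewrite oppr_eq0 => /eqP.
have qp : q = - bd p.
  have := congr1 (pout a) e0; rewrite pout0 poutD poutB pout_cone subr0.
  rewrite (pout_free _ _ fbp) (pout_free _ _ fq) => /eqP; rewrite addrC addr_eq0 => /eqP.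
  by [].
set R0 := [set y in S1 | (y != a) && ~~ delEdge E u v a y].
have R0S : R0 \subset S1 by apply/subsetP => y; rewrite inE => /andP [].
have aR0 : a \notin R0 by rewrite inE eqxx /= andbF.
destruct j as [|k].
  have q0 : q = 0.
    apply: ch_eq0 => s; apply/eqP; apply: contraT => /(supp_uncone sz) [_].
    by rewrite inF => /and3P [_ _]; rewrite cards_eq0 => /eqP /setP /(_ a); rewrite !inE eqxx.
  exists S1, z; apply: (TRIV E (delEdge E u v) S1 0 z dE_sub (And3 sz bz nb)).
  rewrite ez q0 cone0 addr0 => s /(supp_pout sz) [as' sF]; exact: fE.
have sq : supp q (fun s => s \in faces (indFace E R0) k).
  move=> s /(supp_uncone sz) [as' sF]; case: (face_del sF as') => sF' _ ha.
  apply: (face_restrict (fE _ _ sF' as')); apply/subsetP => y ys.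
  rewrite inE (subsetP (sS1 _ _ sF') _ ys) (ha y ys) andbT /=.
  by apply: contraNneq as' => <-.
have fam : forall m, supp m (fun s => s \in faces (indFace E R0) k.+1) -> afree a m.
  move=> m sm; apply: (supp_afree sm) => s; rewrite inF => /and3P [sR _ _].
  by apply: contra aR0; apply: (subsetP sR).
case: (classic (exists m, supp m (fun s => s \in faces (indFace E R0) k.+1) /\ bd m = q))
  => [[m [sm dm]]|nm].
  exists S1, (p + m); split.
  - apply: suppD; first by move=> s /(supp_pout sz) [as' sF]; exact: fE.
    by apply: (supp_mono sm) => s sF; exact: (face_mono sF R0S (fun x y h => h)).
  - by rewrite bdD dm qp subrr.
  - move=> [c [sc dc]]; apply: nb; exists (c - cone a m); split.
      apply: suppB; first by apply: (supp_mono sc) => s; apply: dE_face_mono.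
      apply: (supp_cone sm) => s sF as'; apply: face_add => //; [exact: dE_sym|exact: dE_irr| |].
        exact: (face_mono sF R0S dE_sub).
      move=> y ys; move: sF; rewrite inF => /and3P [sR _ _].
      by move: (subsetP sR y ys); rewrite inE => /and3P [_ _ ->].
    rewrite bdB dc (bd_cone _ _ (fam m sm)) dm [RHS]ez.
    by apply/ffunP => t; rewrite !(chD, chB, chN); ring.
have nbq : nbc (indFace E R0) k q by split.
have wR0 : w \notin R0 by apply: contra wS1; apply: (subsetP R0S).
have xR0 : x \notin R0 by apply: contra xS1; apply: (subsetP R0S).
have hwR0 : forall y, y \in R0 -> ~~ E w y by move=> y /(subsetP R0S); apply: hw1.
have hxR0 : forall y, y \in R0 -> ~~ E x y.
  move=> y yR; apply/negP => /hxa /orP [/eqP yw|/eqP ya].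
    by move: wR0; rewrite -yw yR.
  by move: aR0; rewrite -ya yR.
exists (w |: (x |: R0)), (cone w q - cone x q).
exact: (SUSP E Esym Eirr R0 k q w x nbq wR0 xR0 wx Ewx hwR0 hxR0).
Qed.

Lemma D2 S j z : nbc (indFace (delEdge E u v) S) j z -> exists R z', nbc (indFace E R) j z'.
Proof.
move=> hz.
case: (boolP (w \in S)) => wS.
  by have [z' h] := WL S j z wS hz; exists S, z'.
have [hl|[b hb]] := VA (delEdge E u v) dE_sym dE_irr S j z w hz wS.
  by have [z' h] := WL (w |: S) j z (setU11 _ _) hl; exists (w |: S), z'.
have [a [au xa hxa]] := xnbr.
apply: (UL _ j b a au xa hxa hb).
- by rewrite !inE (negbTE wS) andbF.
- by rewrite !inE dE_w Ewx.
- by move=> y; rewrite !inE dE_w => /andP [].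
Qed.

Lemma reg_eq : reg F E = reg F (delEdge E u v).
Proof.
apply/eqP; rewrite eqn_leq; apply/andP; split; apply: reg_le.
  exact: D1.
exact: D2.
Qed.

End Main.

End Edge.

End Chains.

Local Close Scope ring_scope.

Theorem mainTheorem13 (F : fieldType) (T : finType) (E : rel T)
  (Esym : symmetric E) (Eirr : irreflexive E) (u v w x : T) :
  E u v ->
  w \notin closedNbhEdge E u v ->
  (forall y, E w y -> y \in closedNbhEdge E u v) ->
  E w x -> degree E x = 2 ->
  reg F E = reg F (delEdge E u v).
Proof.
move=> Euv hw hN Ewx deg.
exact: (reg_eq F T E u v Esym Eirr Euv w x hw hN Ewx deg).
Qed.
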